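(* Let $S$ be a rectangular domain, $\bar\eta$ a flow field on $\mathbb{E}(\bar S)$, and $\ell,\ell'\subseteq\bar S$ broken traces with $w_\eta(\ell)>0$ and $w_\eta(\ell')>0$. Then $\ell\succeq\ell'$ or $\ell'\succeq\ell$.
   Context: Lattice and edges. $\tilde{\mathbb{Z}}^2=\{(t,x)\in\mathbb{Z}^2:t+x\text{ even}\}$; edges $\langle y,y'\rangle$ join points at distance $\sqrt2$. For $y=(t,x)$: - $e^\nearrow_y=\langle(t,x),(t+1,x+1)\rangle$, - $e^\searrow_y=\langle(t,x),(t+1,x-1)\rangle$, - $e^\swarrow_y=\langle(t-1,x-1),(t,x)\rangle$, - $e^\nwarrow_y=\langle(t-1,x+1),(t,x)\rangle$. Domains. A rectangular domain is a nonempty set $S=\{(t,x)\in\tilde{\mathbb{Z}}^2: a\le t+x\le b,\ c\le t-x\le d\}$ with even integers $a\le b$, $c\le d$. $\bar S$ is $S$ together with all points joined by an edge to a point of $S$; $\partial\bar S=\bar S\setminus S$; $\mathbb{E}(\bar S)$ is the set of edges with at least one endpoint in $S$. Flow field. A flow field is $\eta(e)\ge0$, $e\in\mathbb{E}(\bar S)$, with $\eta(e^\nwarrow_y)+\eta(e^\nearrow_y)=\eta(e^\swarrow_y)+\eta(e^\searrow_y)$ for all $y\in S$; its birth field is $\xi_y=\eta(e^\nearrow_y)\wedge\eta(e^\searrow_y)$. Association. For $y\in S$, a lower edge $f_1\in\{e^\swarrow_y,e^\searrow_y\}$ with $p_1\in(0,\eta(f_1)]$, and an upper edge $f_2\in\{e^\nwarrow_y,e^\nearrow_y\}$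 with $p_2\in(0,\eta(f_2)]$, write $(f_1,p_1)\sim_y(f_2,p_2)$ exactly when: - Case 1: $f_1=e^\swarrow_y$, $f_2=e^\nwarrow_y$, $p_1\le\eta(f_1)\wedge\eta(f_2)$, $p_2=p_1$; - Case 2: $f_1=e^\searrow_y$, $f_2=e^\nwarrow_y$, $p_2>\eta(e^\swarrow_y)$, $p_1=p_2-\eta(e^\swarrow_y)$; - Case 3: $f_1=e^\swarrow_y$, $f_2=e^\nearrow_y$, $p_1>\eta(e^\nwarrow_y)$, $p_2=p_1-\eta(e^\nwarrow_y)$; - Case 4: $f_1=e^\searrow_y$, $f_2=e^\nearrow_y$, $p_i>\eta(f_i)-\xi_y$ ($i=1,2$), $\eta(f_1)-p_1=\eta(f_2)-p_2$. Broken traces. A broken trace is $\ell=(y_0,e_1,y_1,\dots,e_n,y_n)$, $n\ge1$, with $y_i=(t_i,x_i)\in\tilde{\mathbb{Z}}^2$, $e_i=\langle y_{i-1},y_i\rangle$, $x_i=x_{i-1}+1$, $t_i-t_{i-1}\in\{-1,1\}$. - $D(\ell)=\{x_0,\dots,x_n\}$, and $t_\ell(x)$ is the $t$-coordinate of the vertex of $\ell$ at second coordinate $x$. - $\ell\subseteq\bar S$ means $y_0,y_n\in\bar S$, $y_1,\dots,y_{n-1}\in S$, all $e_i\in\mathbb{E}(\bar S)$. Weight. $w_\eta(\ell)$ is the Lebesgue measure of the set of $p_1\in(0,\eta(e_1)]$ for which there exist $p_i\in(0,\eta(e_i)]$ ($i=2,\dots,n$) with $(e_{i-1},p_{i-1})\sim_{y_{i-1}}(e_i,p_i)$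 for all $i=2,\dots,n$. Order. $\ell\succeq\ell'$ means that $t_\ell(x)\ge t_{\ell'}(x)$ for all $x\in D(\ell)\cap D(\ell')$, and that $t_\ell(x)\ge t_{\ell'}(x')$ for some $x\in D(\ell)$, $x'\in D(\ell')$. *)

(* Defs.v *)
From Stdlib Require Import Reals ZArith.
Open Scope R_scope.

(* Points of Z^2 as (t, x). *)
Definition point : Type := (Z * Z)%type.
(* An edge <y,y'> (|t-t'| = |x-x'| = 1) is stored canonically as the pair
   (lower-time endpoint, higher-time endpoint). *)
Definition edge : Type := (point * point)%type.

Definition in_lattice (y : point) : Prop := Z.Even (fst y + snd y)%Z.

Definition mkedge (a b : point) : edge :=
  if (fst a <? fst b)%Z then (a, b) else (b, a).

Definition e_ne (y : point) : edge := (y, (fst y + 1, snd y + 1)%Z).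
Definition e_se (y : point) : edge := (y, (fst y + 1, snd y - 1)%Z).
Definition e_sw (y : point) : edge := ((fst y - 1, snd y - 1)%Z, y).
Definition e_nw (y : point) : edge := ((fst y - 1, snd y + 1)%Z, y).

Definition rect_dom (a b c d : Z) (y : point) : Prop :=
  in_lattice y /\
  (a <= fst y + snd y <= b)%Z /\ (c <= fst y - snd y <= d)%Z.

Definition adjacent (y y' : point) : Prop :=
  (Z.abs (fst y - fst y') = 1 /\ Z.abs (snd y - snd y') = 1)%Z.

Definition closure (S : point -> Prop) (y : point) : Prop :=
  S y \/ exists y', S y' /\ in_lattice y /\ adjacent y y'.

Definition in_edges (S : point -> Prop) (e : edge) : Prop :=
  S (fst e) \/ S (snd e).

Definition flow_field (S : point -> Prop) (eta : edge -> R) : Prop :=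
  (forall e, in_edges S e -> 0 <= eta e) /\
  (forall y, S y -> eta (e_nw y) + eta (e_ne y) = eta (e_sw y) + eta (e_se y)).

Definition birth (eta : edge -> R) (y : point) : R :=
  Rmin (eta (e_ne y)) (eta (e_se y)).

Definition assoc (eta : edge -> R) (y : point) (f1 : edge) (p1 : R)
  (f2 : edge) (p2 : R) : Prop :=
  (f1 = e_sw y \/ f1 = e_se y) /\ 0 < p1 <= eta f1 /\
  (f2 = e_nw y \/ f2 = e_ne y) /\ 0 < p2 <= eta f2 /\
  ( (f1 = e_sw y /\ f2 = e_nw y /\ p1 <= Rmin (eta f1) (eta f2) /\ p2 = p1)
 \/ (f1 = e_se y /\ f2 = e_nw y /\ p2 > eta (e_sw y) /\ p1 = p2 - eta (e_sw y))
 \/ (f1 = e_sw y /\ f2 = e_ne y /\ p1 > eta (e_nw y) /\ p2 = p1 - eta (e_nw y))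
 \/ (f1 = e_se y /\ f2 = e_ne y /\ p1 > eta f1 - birth eta y /\
     p2 > eta f2 - birth eta y /\ eta f1 - p1 = eta f2 - p2) ).

(* Broken trace: y_i = (tr_t i, tr_x0 + i), i = 0..tr_n. *)
Record trace : Type := Trace { tr_x0 : Z; tr_n : nat; tr_t : nat -> Z }.

Definition vert (l : trace) (i : nat) : point :=
  (tr_t l i, (tr_x0 l + Z.of_nat i)%Z).

Definition is_trace (l : trace) : Prop :=
  (1 <= tr_n l)%nat /\
  (forall i, (i <= tr_n l)%nat -> in_lattice (vert l i)) /\
  (forall i, (i < tr_n l)%nat ->
     (tr_t l (S i) - tr_t l i = 1 \/ tr_t l (S i) - tr_t l i = -1)%Z).

(* e_i = <y_{i-1}, y_i>, i = 1..n *)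
Definition tr_edge (l : trace) (i : nat) : edge :=
  mkedge (vert l (i - 1)) (vert l i).

Definition dom (l : trace) (x : Z) : Prop :=
  (tr_x0 l <= x <= tr_x0 l + Z.of_nat (tr_n l))%Z.

Definition t_at (l : trace) (x : Z) : Z := tr_t l (Z.to_nat (x - tr_x0 l)).

Definition trace_in (S : point -> Prop) (l : trace) : Prop :=
  closure S (vert l 0) /\ closure S (vert l (tr_n l)) /\
  (forall i, (1 <= i < tr_n l)%nat -> S (vert l i)) /\
  (forall i, (1 <= i <= tr_n l)%nat -> in_edges S (tr_edge l i)).

(* The set whose Lebesgue measure is w_eta(l). *)
Definition weight_set (eta : edge -> R) (l : trace) (p1 : R) : Prop :=
  0 < p1 <= eta (tr_edge l 1) /\
  exists p : nat -> R, p 1%nat = p1 /\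
    (forall i, (2 <= i <= tr_n l)%nat -> 0 < p i <= eta (tr_edge l i)) /\
    (forall i, (2 <= i <= tr_n l)%nat ->
       assoc eta (vert l (i - 1)) (tr_edge l (i - 1)) (p (i - 1)%nat)
             (tr_edge l i) (p i)).

(* "A has positive Lebesgue (outer) measure": there is eps > 0 such that
   every countable cover of A by open intervals (a n, b n) has total length
   at least eps (witnessed by some partial sum). *)
Definition positive_measure (A : R -> Prop) : Prop :=
  exists eps, 0 < eps /\
    forall a b : nat -> R,
      (forall n, a n <= b n) ->
      (forall x, A x -> exists n, a n < x < b n) ->
      exists N, eps <= sum_f_R0 (fun n => b n - a n) N.

Definition trace_ge (l l' : trace) : Prop :=
  (forall x, dom l x -> dom l' x -> (t_at l' x <= t_at l x)%Z) /\
  (exists x x', dom l x /\ dom l' x' /\ (t_at l' x' <= t_at l x)%Z).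

(* Main.v *)
Require Import Defs.
From Stdlib Require Import Reals ZArith Lia Lra Classical.
Open Scope R_scope.

Definition kge (s : Z) (p : R) (s' : Z) (q : R) : Prop :=
  (s' < s)%Z \/ (s = s' /\ q <= p).

Definition cons_at (eta : edge -> R) (y : point) : Prop :=
  eta (e_nw y) + eta (e_ne y) = eta (e_sw y) + eta (e_se y).

Lemma sw_se y : e_sw y <> e_se y.
Proof. destruct y as [t x]; unfold e_sw, e_se; simpl; intro H; injection H; lia. Qed.
Lemma nw_ne y : e_nw y <> e_ne y.
Proof. destruct y as [t x]; unfold e_nw, e_ne; simpl; intro H; injection H; lia. Qed.

Ltac bad :=
  match goal with
  | H : e_sw ?y = e_se ?y |- _ => exfalso; exact (sw_se y H)
  | H : e_se ?y = e_sw ?y |- _ => exfalso; exact (sw_se y (eq_sym H))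
  | H : e_nw ?y = e_ne ?y |- _ => exfalso; exact (nw_ne y H)
  | H : e_ne ?y = e_nw ?y |- _ => exfalso; exact (nw_ne y (eq_sym H))
  end.

Lemma c_sw_nw eta y p q : assoc eta y (e_sw y) p (e_nw y) q ->
  q = p /\ 0 < p /\ p <= eta (e_nw y) /\ p <= eta (e_sw y).
Proof.
  intros [_ [Hp [_ [Hq H]]]].
  destruct H as [[_ [_ [H1 H2]]] | [[E _] | [[_ [E _]] | [E _]]]]; try bad.
  pose proof (Rmin_l (eta (e_sw y)) (eta (e_nw y))).
  pose proof (Rmin_r (eta (e_sw y)) (eta (e_nw y))). repeat split; lra.
Qed.

Lemma c_sw_ne eta y p q : assoc eta y (e_sw y) p (e_ne y) q ->
  p > eta (e_nw y) /\ q = p - eta (e_nw y) /\ p <= eta (e_sw y) /\ 0 < q.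
Proof.
  intros [_ [Hp [_ [Hq H]]]].
  destruct H as [[_ [E _]] | [[E _] | [[_ [_ [H1 H2]]] | [E _]]]]; try bad.
  repeat split; lra.
Qed.

Lemma c_se_nw eta y p q : assoc eta y (e_se y) p (e_nw y) q ->
  q > eta (e_sw y) /\ p = q - eta (e_sw y) /\ q <= eta (e_nw y) /\ 0 < p.
Proof.
  intros [_ [Hp [_ [Hq H]]]].
  destruct H as [[E _] | [[_ [_ [H1 H2]]] | [[E _] | [_ [E _]]]]]; try bad.
  repeat split; lra.
Qed.

Lemma c_se_ne eta y p q : assoc eta y (e_se y) p (e_ne y) q ->
  p > eta (e_se y) - birth eta y /\ q > eta (e_ne y) - birth eta y /\
  eta (e_se y) - p = eta (e_ne y) - q /\ p <= eta (e_se y) /\ q <= eta (e_ne y).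
Proof.
  intros [_ [Hp [_ [Hq H]]]].
  destruct H as [[E _] | [[_ [E _]] | [[E _] | [_ [_ [H1 [H2 H3]]]]]]]; try bad.
  repeat split; lra.
Qed.

Lemma mk_sw m x : mkedge ((m-1)%Z, (x-1)%Z) (m, x) = e_sw (m, x).
Proof. unfold mkedge, e_sw; simpl. rewrite (proj2 (Z.ltb_lt _ _)) by lia. reflexivity. Qed.
Lemma mk_se m x : mkedge ((m+1)%Z, (x-1)%Z) (m, x) = e_se (m, x).
Proof. unfold mkedge, e_se; simpl. rewrite (proj2 (Z.ltb_ge _ _)) by lia. reflexivity. Qed.
Lemma mk_ne m x : mkedge (m, x) ((m+1)%Z, (x+1)%Z) = e_ne (m, x).
Proof. unfold mkedge, e_ne; simpl. rewrite (proj2 (Z.ltb_lt _ _)) by lia. reflexivity. Qed.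
Lemma mk_nw m x : mkedge (m, x) ((m-1)%Z, (x+1)%Z) = e_nw (m, x).
Proof. unfold mkedge, e_nw; simpl. rewrite (proj2 (Z.ltb_ge _ _)) by lia. reflexivity. Qed.

Lemma local_step eta m x a r m' a' r' p1 p2 q1 q2 :
  cons_at eta (m, x) -> cons_at eta (m', x) ->
  Z.Even (m + x) -> Z.Even (m' + x) ->
  (a = m + 1 \/ a = m - 1)%Z -> (r = m + 1 \/ r = m - 1)%Z ->
  (a' = m' + 1 \/ a' = m' - 1)%Z -> (r' = m' + 1 \/ r' = m' - 1)%Z ->
  assoc eta (m, x) (mkedge (a, (x-1)%Z) (m, x)) p1 (mkedge (m, x) (r, (x+1)%Z)) p2 ->
  assoc eta (m', x) (mkedge (a', (x-1)%Z) (m', x)) q1 (mkedge (m', x) (r', (x+1)%Z)) q2 ->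
  kge (a + m) p1 (a' + m') q1 -> kge (m + r) p2 (m' + r') q2.
Proof.
  intros C C' [k Hk] [k' Hk'] Ha Hr Ha' Hr' A A' K.
  destruct (Z.lt_trichotomy m m') as [Hlt | [Heq | Hgt]].
  - exfalso. destruct K as [K | [K _]]; lia.
  - subst m'. unfold cons_at in C.
    assert (Hb1 : birth eta (m, x) <= eta (e_ne (m, x))) by apply Rmin_l.
    assert (Hb2 : birth eta (m, x) <= eta (e_se (m, x))) by apply Rmin_r.
    destruct Ha as [-> | ->]; destruct Hr as [-> | ->];
    destruct Ha' as [-> | ->]; destruct Hr' as [-> | ->];
    rewrite ?mk_sw, ?mk_se, ?mk_ne, ?mk_nw in A;
    rewrite ?mk_sw, ?mk_se, ?mk_ne, ?mk_nw in A';
    first [ apply c_sw_nw in A | apply c_sw_ne in A | apply c_se_nw in A | apply c_se_ne in A ];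
    first [ apply c_sw_nw in A' | apply c_sw_ne in A' | apply c_se_nw in A' | apply c_se_ne in A' ];
    decompose [and] A; decompose [and] A';
    destruct K as [K | [K1 K2]];
    first [ exfalso; lia | left; lia | right; split; [lia | lra] | exfalso; lra ].
  - left. lia.
Qed.

Definition good (eta : edge -> R) (T : Z -> Z) (P : Z -> R) (u v : Z) : Prop :=
  (u < v)%Z /\
  (forall x, (u <= x <= v)%Z -> Z.Even (T x + x)) /\
  (forall x, (u <= x < v)%Z -> T (x+1)%Z = (T x + 1)%Z \/ T (x+1)%Z = (T x - 1)%Z) /\
  (forall x, (u < x < v)%Z -> cons_at eta (T x, x)) /\
  (forall x, (u < x < v)%Z ->
     assoc eta (T x, x) (mkedge (T (x-1)%Z, (x-1)%Z) (T x, x)) (P x)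
           (mkedge (T x, x) (T (x+1)%Z, (x+1)%Z)) (P (x+1)%Z)).

Definition K (T : Z -> Z) (P : Z -> R) (T' : Z -> Z) (P' : Z -> R) (x : Z) :=
  kge (T (x-1)%Z + T x) (P x) (T' (x-1)%Z + T' x) (P' x).

Lemma prop_step eta T P u v T' P' u' v' x :
  good eta T P u v -> good eta T' P' u' v' ->
  (u < x < v)%Z -> (u' < x < v')%Z ->
  K T P T' P' x -> K T P T' P' (x+1).
Proof.
  intros [_ [E [St [C A]]]] [_ [E' [St' [C' A']]]] H H' Kx.
  unfold K in *. replace (x + 1 - 1)%Z with x by lia.
  assert (Ha : (T (x-1) = T x + 1 \/ T (x-1) = T x - 1)%Z).
  { pose proof (St (x-1)%Z ltac:(lia)) as S1. replace (x-1+1)%Z with x in S1 by lia. lia. }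
  assert (Ha' : (T' (x-1) = T' x + 1 \/ T' (x-1) = T' x - 1)%Z).
  { pose proof (St' (x-1)%Z ltac:(lia)) as S1. replace (x-1+1)%Z with x in S1 by lia. lia. }
  eapply local_step with (x := x) (a := T (x-1)%Z) (a' := T' (x-1)%Z).
  - apply C; lia.
  - apply C'; lia.
  - apply E; lia.
  - apply E'; lia.
  - exact Ha.
  - apply St; lia.
  - exact Ha'.
  - apply St'; lia.
  - apply A; lia.
  - apply A'; lia.
  - exact Kx.
Qed.

Lemma prop_n eta T P u v T' P' u' v' x1 :
  good eta T P u v -> good eta T' P' u' v' ->
  (u < x1)%Z -> (u' < x1)%Z -> K T P T' P' x1 ->
  forall n : nat, (x1 + Z.of_nat n <= v)%Z -> (x1 + Z.of_nat n <= v')%Z ->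
  K T P T' P' (x1 + Z.of_nat n).
Proof.
  intros G G' H1 H2 Kx n. induction n as [|n IH]; intros Hv Hv'.
  - replace (x1 + Z.of_nat 0)%Z with x1 by lia. exact Kx.
  - replace (x1 + Z.of_nat (S n))%Z with (x1 + Z.of_nat n + 1)%Z by lia.
    eapply prop_step; eauto; try lia. apply IH; lia.
Qed.

Lemma bound eta T P u v T' P' u' v' x :
  good eta T P u v -> good eta T' P' u' v' ->
  (u <= x - 1)%Z -> (x <= v)%Z -> (u' <= x - 1)%Z -> (x <= v')%Z ->
  K T P T' P' x -> (T' (x-1) <= T (x-1))%Z /\ (T' x <= T x)%Z.
Proof.
  intros [_ [E [St _]]] [_ [E' [St' _]]] H1 H2 H3 H4 Kx.
  pose proof (St (x-1)%Z ltac:(lia)) as S1. replace (x-1+1)%Z with x in S1 by lia.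
  pose proof (St' (x-1)%Z ltac:(lia)) as S2. replace (x-1+1)%Z with x in S2 by lia.
  destruct (E (x-1)%Z ltac:(lia)) as [k Hk].
  destruct (E' (x-1)%Z ltac:(lia)) as [k' Hk'].
  unfold K, kge in Kx.
  assert (T' (x-1) + T' x <= T (x-1) + T x)%Z by (destruct Kx as [Kx|[Kx _]]; lia).
  clear Kx E E' St St'.
  destruct S1 as [S1|S1]; destruct S2 as [S2|S2]; rewrite S1, S2 in *; lia.
Qed.

Lemma conclude eta T P u v T' P' u' v' :
  good eta T P u v -> good eta T' P' u' v' ->
  (Z.max u u' < Z.min v v')%Z -> K T P T' P' (Z.max u u' + 1) ->
  forall x, (Z.max u u' <= x <= Z.min v v')%Z -> (T' x <= T x)%Z.
Proof.
  intros G G' Hlt Kx x Hx.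
  assert (Hgen : forall y, (Z.max u u' + 1 <= y <= Z.min v v')%Z -> K T P T' P' y).
  { intros y Hy.
    replace y with (Z.max u u' + 1 + Z.of_nat (Z.to_nat (y - (Z.max u u' + 1))))%Z
      by (rewrite Z2Nat.id; lia).
    eapply prop_n; eauto; try lia; rewrite Z2Nat.id; lia. }
  destruct (Z.eq_dec x (Z.max u u')) as [->|Hne].
  - pose proof (Hgen (Z.max u u' + 1)%Z ltac:(lia)) as Ky.
    destruct (bound eta T P u v T' P' u' v' (Z.max u u' + 1)%Z G G' ltac:(lia) ltac:(lia) ltac:(lia) ltac:(lia) Ky) as [B _].
    replace (Z.max u u' + 1 - 1)%Z with (Z.max u u') in B by lia. exact B.
  - pose proof (Hgen x ltac:(lia)) as Ky.
    destruct (bound eta T P u v T' P' u' v' x G G' ltac:(lia) ltac:(lia) ltac:(lia) ltac:(lia) Ky) as [_ B].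
    exact B.
Qed.

Lemma t_vert l i : t_at l (tr_x0 l + Z.of_nat i) = tr_t l i.
Proof. unfold t_at. replace (tr_x0 l + Z.of_nat i - tr_x0 l)%Z with (Z.of_nat i) by lia.
  rewrite Nat2Z.id. reflexivity. Qed.

Lemma split_x x0 x : (x0 <= x)%Z -> exists i, x = (x0 + Z.of_nat i)%Z.
Proof. intros H. exists (Z.to_nat (x - x0)). rewrite Z2Nat.id; lia. Qed.

Lemma vert_eq l i : vert l i = (t_at l (tr_x0 l + Z.of_nat i), (tr_x0 l + Z.of_nat i)%Z).
Proof. unfold vert. rewrite t_vert. reflexivity. Qed.

Lemma extract Sd eta l :
  is_trace l -> trace_in Sd l -> flow_field Sd eta ->
  (exists p1, weight_set eta l p1) ->
  exists P, good eta (t_at l) P (tr_x0 l) (tr_x0 l + Z.of_nat (tr_n l)).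
Proof.
  intros [Hn [Hlat Hstep]] [_ [_ [HS _]]] [_ Hcons] [p1 [_ [p [_ [_ Has]]]]].
  set (x0 := tr_x0 l).
  exists (fun x => p (Z.to_nat (x - x0))).
  assert (PP : forall i, p (Z.to_nat (x0 + Z.of_nat i - x0)) = p i).
  { intro i. replace (x0 + Z.of_nat i - x0)%Z with (Z.of_nat i) by lia. rewrite Nat2Z.id. reflexivity. }
  split; [lia|]. split; [|split; [|split]].
  - intros x Hx. destruct (split_x x0 x ltac:(lia)) as [i ->].
    pose proof (Hlat i ltac:(lia)) as L. unfold in_lattice in L. rewrite vert_eq in L. exact L.
  - intros x Hx. destruct (split_x x0 x ltac:(lia)) as [i ->].
    replace (x0 + Z.of_nat i + 1)%Z with (x0 + Z.of_nat (S i))%Z by lia.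
    unfold x0. rewrite !t_vert. pose proof (Hstep i ltac:(lia)). lia.
  - intros x Hx. destruct (split_x x0 x ltac:(lia)) as [i ->].
    unfold cons_at. apply Hcons. rewrite <- vert_eq. apply HS. lia.
  - intros x Hx. destruct (split_x x0 x ltac:(lia)) as [i ->].
    pose proof (Has (S i) ltac:(lia)) as A.
    replace (S i - 1)%nat with i in A by lia.
    unfold tr_edge in A. replace (S i - 1)%nat with i in A by lia.
    replace (x0 + Z.of_nat i + 1)%Z with (x0 + Z.of_nat (S i))%Z by lia.
    replace (x0 + Z.of_nat i - 1)%Z with (x0 + Z.of_nat (i - 1))%Z by lia.
    rewrite !PP. unfold x0. rewrite <- !vert_eq. exact A.
Qed.

Lemma sum0 M : sum_f_R0 (fun _ => 0 - 0) M = 0.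
Proof. induction M as [|M IHM]; cbn [sum_f_R0]. lra. rewrite IHM. lra. Qed.

Lemma nonempty A : positive_measure A -> exists p, A p.
Proof.
  intros [eps [He H]]. apply NNPP. intro N.
  destruct (H (fun _ => 0) (fun _ => 0)) as [M HM].
  - intros; lra.
  - intros x Ax. exfalso. apply N. exists x. exact Ax.
  - rewrite sum0 in HM. lra.
Qed.

Lemma kge_total s p s' q : kge s p s' q \/ kge s' q s p.
Proof.
  unfold kge. destruct (Z.lt_trichotomy s s') as [H|[H|H]].
  - right; left; exact H.
  - destruct (Rle_or_lt p q); [right|left]; right; split; auto; lra.
  - left; left; exact H.
Qed.

Theorem mainTheorem8 (a b c d : Z) (eta : edge -> R) (l l' : trace) :
  Z.Even a -> Z.Even b -> Z.Even c -> Z.Even d ->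
  (a <= b)%Z -> (c <= d)%Z ->
  flow_field (rect_dom a b c d) eta ->
  is_trace l -> is_trace l' ->
  trace_in (rect_dom a b c d) l -> trace_in (rect_dom a b c d) l' ->
  positive_measure (weight_set eta l) ->
  positive_measure (weight_set eta l') ->
  trace_ge l l' \/ trace_ge l' l.
Proof.
  intros _ _ _ _ _ _ F Tl Tl' Il Il' Ml Ml'.
  destruct (extract _ _ _ Tl Il F (nonempty _ Ml)) as [P G].
  destruct (extract _ _ _ Tl' Il' F (nonempty _ Ml')) as [P' G'].
  set (v := (tr_x0 l + Z.of_nat (tr_n l))%Z) in *.
  set (v' := (tr_x0 l' + Z.of_nat (tr_n l'))%Z) in *.
  set (u := tr_x0 l) in *. set (u' := tr_x0 l') in *.
  assert (Hd : forall x, dom l x <-> (u <= x <= v)%Z) by (intros; unfold dom; tauto).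
  assert (Hd' : forall x, dom l' x <-> (u' <= x <= v')%Z) by (intros; unfold dom; tauto).
  assert (Gu := proj1 G). assert (Gu' := proj1 G').
  clearbody u v u' v'.
  destruct (Z_lt_le_dec (Z.min v v') (Z.max u u')) as [Hdis | Hov].
  - destruct (Z_le_gt_dec (t_at l' u') (t_at l u)) as [Hc|Hc].
    + left. split.
      * intros x Hx Hx'. apply Hd in Hx. apply Hd' in Hx'. lia.
      * exists u, u'. rewrite Hd, Hd'. repeat split; lia.
    + right. split.
      * intros x Hx Hx'. apply Hd in Hx'. apply Hd' in Hx. lia.
      * exists u', u. rewrite Hd, Hd'. repeat split; lia.
  - destruct (Z.eq_dec (Z.min v v') (Z.max u u')) as [Heq | Hne].
    + set (z := Z.max u u') in *.
      destruct (Z_le_gt_dec (t_at l' z) (t_at l z)) as [Hc|Hc].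
      * left. split.
        -- intros x Hx Hx'. apply Hd in Hx. apply Hd' in Hx'.
           assert (x = z) by lia. subst x. exact Hc.
        -- exists z, z. rewrite Hd, Hd'. repeat split; lia.
      * right. split.
        -- intros x Hx Hx'. apply Hd in Hx'. apply Hd' in Hx.
           assert (x = z) by lia. subst x. lia.
        -- exists z, z. rewrite Hd, Hd'. repeat split; lia.
    + assert (Hlt : (Z.max u u' < Z.min v v')%Z) by lia.
      destruct (kge_total (t_at l (Z.max u u' + 1 - 1) + t_at l (Z.max u u' + 1))
                          (P (Z.max u u' + 1)%Z)
                          (t_at l' (Z.max u u' + 1 - 1) + t_at l' (Z.max u u' + 1))
                          (P' (Z.max u u' + 1)%Z)) as [Kk|Kk].
      * pose proof (conclude _ _ _ _ _ _ _ _ _ G G' Hlt Kk) as C.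
        left. split.
        -- intros x Hx Hx'. apply Hd in Hx. apply Hd' in Hx'. apply C. lia.
        -- exists (Z.max u u'), (Z.max u u'). rewrite Hd, Hd'.
           repeat split; try lia. apply C. lia.
      * rewrite Z.max_comm in Kk. rewrite Z.max_comm, Z.min_comm in Hlt.
        pose proof (conclude _ _ _ _ _ _ _ _ _ G' G Hlt Kk) as C.
        right. split.
        -- intros x Hx Hx'. apply Hd in Hx'. apply Hd' in Hx. apply C. lia.
        -- exists (Z.max u' u), (Z.max u' u). rewrite Hd, Hd'.
           repeat split; try lia. apply C. lia.
Qed.
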